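(* For $p\ge1$, $t\in\mathbb{R}$ and $\phi\in\mathbb{R}$ let \[ \Psi_{p,t}(\phi)=t\sin\big((1-1/p)\phi\big)+2(1-t)\sin\phi\,\cos(\phi/p) =(1-t)\sin\big((1+1/p)\phi\big)+\sin\big((1-1/p)\phi\big), \] and let \[ g(p)=\min\{t\in\mathbb{R}:\ \Psi_{p,t}(\phi)\ge0 \text{ for all } 0<\phi<\pi\}. \] Then the function $g$ is continuous on $[1,\infty)$, $g(1)=1$, $g(p)=0$ for all $p\ge2$, and $g$ is strictly decreasing on $[1,2]$. In particular $g(3/2)=1/5$. *)

(* Defs.v *)
From Stdlib Require Import Reals Lra ClassicalEpsilon.
Open Scope R_scope.

Definition Psi (p t phi : R) : R :=
  t * sin ((1 - 1 / p) * phi) + 2 * (1 - t) * sin phi * cos (phi / p).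

Definition admissible (p t : R) : Prop :=
  forall phi : R, 0 < phi < PI -> 0 <= Psi p t phi.

Definition is_min (S : R -> Prop) (t : R) : Prop :=
  S t /\ forall t', S t' -> t <= t'.

(* g(p) = min { t | admissible p t }, chosen by Hilbert's epsilon; the main
   theorem asserts this minimum exists for p >= 1, so g p is that minimum. *)
Definition g (p : R) : R :=
  epsilon (inhabits 0) (fun t => is_min (admissible p) t).

(* Main.v *)
Require Import Defs.
From Stdlib Require Import Reals Lra Lia Psatz ClassicalEpsilon Classical.
Open Scope R_scope.

Lemma Psi_alt p t phi : p <> 0 ->
  Psi p t phi = sin ((1 - /p) * phi) + (1 - t) * sin ((1 + /p) * phi).
Proof.
  intros Hp. unfold Psi.
  replace ((1 - 1/p) * phi) with (phi - phi/p) by (field; auto).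
  replace ((1 - /p) * phi) with (phi - phi/p) by (field; auto).
  replace ((1 + /p) * phi) with (phi + phi/p) by (field; auto).
  unfold Rminus. rewrite sin_plus, sin_plus, sin_neg, cos_neg. ring.
Qed.

Lemma abs_sin_le x : Rabs (sin x) <= Rabs x.
Proof.
  assert (H: forall y, 0 < y -> Rabs (sin y) <= y).
  { intros y Hy. apply Rabs_le. split.
    - destruct (Rle_lt_dec y 1).
      + assert (0 <= sin y) by (apply sin_ge_0; pose proof PI2_3_2; lra). lra.
      + pose proof (SIN_bound y). lra.
    - pose proof (sin_lt_x y Hy). lra. }
  destruct (Rtotal_order x 0) as [h|[h|h]].
  - rewrite <- (Ropp_involutive x), sin_neg, Rabs_Ropp, Rabs_Ropp.
    rewrite (Rabs_right (-x)) by lra. apply H; lra.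
  - subst. rewrite sin_0, Rabs_R0. lra.
  - rewrite (Rabs_right x) by lra. apply H; lra.
Qed.

Lemma sin_lip u v : Rabs (sin u - sin v) <= Rabs (u - v).
Proof.
  rewrite form4, !Rabs_mult.
  pose proof (abs_sin_le ((u - v)/2)).
  assert (Rabs (cos ((u+v)/2)) <= 1) by (apply Rabs_le; apply COS_bound).
  rewrite Rabs_right by lra.
  replace ((u-v)/2) with ((u-v)*/2) in H by field.
  rewrite Rabs_mult, (Rabs_right (/2)) in H by lra.
  assert (0 <= Rabs (sin ((u - v) / 2))) by apply Rabs_pos.
  nra.
Qed.

Definition F p t phi := sin ((1 - /p) * phi) + (1 - t) * sin ((1 + /p) * phi).

Lemma PsiF p t phi : 1 <= p -> Psi p t phi = F p t phi.
Proof. intros; apply Psi_alt; lra. Qed.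

Lemma inv_bounds p : 1 <= p -> 0 < /p <= 1.
Proof.
  intros. split. apply Rinv_0_lt_compat; lra.
  rewrite <- Rinv_1. apply Rinv_le_contravar; lra.
Qed.

Lemma F_cont p t x : continuity_pt (F p t) x.
Proof. unfold F. reg. Qed.

Lemma adm_convex p t1 t2 t : 1 <= p -> admissible p t1 -> admissible p t2 ->
  t1 <= t <= t2 -> admissible p t.
Proof.
  intros Hp H1 H2 Ht phi Hphi. specialize (H1 phi Hphi). specialize (H2 phi Hphi).
  rewrite PsiF in * by lra. unfold F in *.
  destruct (Rle_lt_dec 0 (sin ((1 + / p) * phi))); nra.
Qed.

Lemma adm1 p : 1 <= p -> admissible p 1.
Proof.
  intros Hp phi Hphi. rewrite PsiF by lra. unfold F.
  pose proof (inv_bounds p Hp).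
  replace (1-1) with 0 by ring. rewrite Rmult_0_l, Rplus_0_r.
  apply sin_ge_0; nra.
Qed.

Lemma F_PI p t : 1 <= p -> F p t PI = t * sin (/p * PI).
Proof.
  intros. unfold F.
  replace ((1 - /p) * PI) with (PI - /p*PI) by ring.
  replace ((1 + /p) * PI) with (/p*PI + PI) by ring.
  rewrite sin_PI_x, neg_sin. ring.
Qed.

Lemma F_neg_near_PI p t : 1 <= p -> F p t PI < 0 ->
  exists phi, 0 < phi < PI /\ F p t phi < 0.
Proof.
  intros Hp Hneg.
  destruct (F_cont p t PI (- F p t PI)) as [alp [Halp H]]; [lra|].
  set (d := Rmin alp PI / 2).
  assert (Hd: 0 < d <= alp/2) by (unfold d; pose proof PI_RGT_0;
     pose proof (Rmin_l alp PI); assert (0 < Rmin alp PI) by (apply Rmin_glb_lt; lra); lra).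
  assert (Hd2: d <= PI/2) by (unfold d; pose proof (Rmin_r alp PI); lra).
  exists (PI - d). split. pose proof PI_RGT_0; lra.
  specialize (H (PI - d)). simpl in H. unfold R_dist, D_x, no_cond in H.
  assert (Rabs (F p t (PI - d) - F p t PI) < - F p t PI).
  { apply H. split. split; [auto|lra].
    rewrite Rabs_left by lra. lra. }
  apply Rabs_def2 in H0. lra.
Qed.

Lemma lower0 p t : 1 < p -> admissible p t -> 0 <= t.
Proof.
  intros Hp Ha. destruct (Rle_lt_dec 0 t) as [|Ht]; auto. exfalso.
  pose proof (inv_bounds p (Rlt_le _ _ Hp)).
  assert (/p < 1). { rewrite <- Rinv_1. apply Rinv_lt_contravar; lra. }
  assert (0 < sin (/p*PI)) by (apply sin_gt_0; pose proof PI_RGT_0; nra).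
  destruct (F_neg_near_PI p t) as [phi [Hphi Hf]]; [lra| rewrite F_PI by lra; nra|].
  specialize (Ha phi Hphi). rewrite PsiF in Ha by lra. lra.
Qed.

Lemma lower1 t : admissible 1 t -> 1 <= t.
Proof.
  intros Ha. assert (0 < 3*PI/4 < PI) by (pose proof PI_RGT_0; lra).
  specialize (Ha _ H). rewrite PsiF in Ha by lra. unfold F in Ha.
  rewrite Rinv_1 in Ha.
  replace ((1-1)*(3*PI/4)) with 0 in Ha by ring.
  replace ((1+1)*(3*PI/4)) with (3*(PI/2)) in Ha by field.
  rewrite sin_0, sin_3PI2 in Ha. lra.
Qed.

Lemma lower p : 1 <= p -> exists lb, forall t, admissible p t -> lb <= t.
Proof.
  intros Hp. destruct (Req_dec p 1) as [->|].
  - exists 1. apply lower1.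
  - exists 0. intros; apply (lower0 p); auto; lra.
Qed.

Lemma min_exists p : 1 <= p -> exists t, is_min (admissible p) t.
Proof.
  intros Hp. destruct (lower p Hp) as [lb Hlb].
  set (E := fun x => admissible p (-x)).
  assert (bound E) by (exists (-lb); intros x Hx; specialize (Hlb _ Hx); lra).
  assert (exists x, E x) by (exists (Ropp 1); unfold E; rewrite Ropp_involutive; apply adm1; auto).
  destruct (completeness E H H0) as [m [Hub Hl]].
  exists (-m). split.
  - intros phi Hphi. destruct (Rle_lt_dec 0 (Psi p (-m) phi)) as [|Hn]; auto. exfalso.
    set (eta := - Psi p (-m) phi).
    assert (exists x, E x /\ m - eta < x).
    { apply NNPP. intro Hno. assert (is_upper_bound E (m - eta)).
      { intros x Hx. destruct (Rle_lt_dec x (m - eta)); auto. exfalso; apply Hno; eauto. }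
      specialize (Hl _ H1). unfold eta in Hl. lra. }
    destruct H1 as [x [Ex Hx]]. assert (x <= m) by (apply Hub; auto).
    pose proof (Ex phi Hphi). rewrite PsiF in *|- by lra. unfold eta in Hx.
    rewrite PsiF in Hx by lra. unfold F in *.
    pose proof (SIN_bound ((1 + / p) * phi)). nra.
  - intros t' Ht'. assert (E (-t')) by (unfold E; rewrite Ropp_involutive; auto).
    specialize (Hub _ H1). lra.
Qed.

Lemma is_min_unique S a b : is_min S a -> is_min S b -> a = b.
Proof. intros [Ha Ha'] [Hb Hb']. specialize (Ha' _ Hb). specialize (Hb' _ Ha). lra. Qed.

Lemma g_spec p : 1 <= p -> is_min (admissible p) (g p).
Proof.
  intros Hp. unfold g. apply epsilon_spec. apply min_exists; auto.
Qed.

Lemma g_eq p t : 1 <= p -> is_min (admissible p) t -> g p = t.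
Proof. intros. eapply is_min_unique; eauto. apply g_spec; auto. Qed.

Lemma g_le1 p : 1 <= p -> g p <= 1.
Proof. intros. apply (g_spec p H). apply adm1; auto. Qed.

Lemma g_ge0 p : 1 <= p -> 0 <= g p.
Proof.
  intros. destruct (Req_dec p 1) as [->|].
  - pose proof (lower1 _ (proj1 (g_spec 1 H))). lra.
  - apply (lower0 p); [lra|]. apply g_spec; auto.
Qed.

Lemma g_ge2 p : 2 <= p -> g p = 0.
Proof.
  intros Hp. apply g_eq; [lra|]. split.
  - intros phi Hphi. unfold Psi.
    assert (0 < sin phi) by (apply sin_gt_0; lra).
    assert (0 <= cos (phi/p)).
    { apply cos_ge_0. assert (0 < phi/p) by (apply Rdiv_lt_0_compat; lra). lra.
      apply Rmult_le_reg_r with p; [lra|]. unfold Rdiv. rewrite Rmult_assoc, Rinv_l by lra.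
      nra. }
    nra.
  - intros. apply (lower0 p); auto; lra.
Qed.

Lemma g1 : g 1 = 1.
Proof.
  apply g_eq; [lra|]. split. apply adm1; lra. apply lower1.
Qed.

Lemma not_adm0 p : 1 <= p < 2 -> ~ admissible p 0.
Proof.
  intros Hp Ha. pose proof (inv_bounds p (proj1 Hp)) as Hs.
  assert (Hs2 : / 2 < / p) by (apply Rinv_lt_contravar; lra).
  set (s := /p) in *.
  set (phi := (PI / (2 * s) + PI) / 2).
  assert (Hps : phi * s = (PI/2 + PI * s)/2) by (unfold phi; field; lra).
  assert (PI / (2*s) < PI).
  { apply Rmult_lt_reg_r with (2*s); [lra|]. unfold Rdiv. rewrite Rmult_assoc, Rinv_l by lra.
    pose proof PI_RGT_0. nra. }
  assert (0 < PI / (2*s)) by (apply Rdiv_lt_0_compat; pose proof PI_RGT_0; lra).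
  assert (Hphi: 0 < phi < PI) by (unfold phi; lra).
  specialize (Ha phi Hphi). unfold Psi in Ha.
  replace (phi / p) with (phi * s) in Ha by (unfold s; reflexivity).
  assert (0 < sin phi) by (apply sin_gt_0; lra).
  assert (cos (phi * s) < 0).
  { rewrite Hps. pose proof PI_RGT_0. apply cos_lt_0; nra. }
  nra.
Qed.

Lemma g_pos p : 1 <= p < 2 -> 0 < g p.
Proof.
  intros Hp. pose proof (g_ge0 p (proj1 Hp)).
  destruct (Req_dec (g p) 0) as [E|]; [|lra].
  exfalso. apply (not_adm0 p Hp). rewrite <- E. apply g_spec; lra.
Qed.

Lemma sin3 x : sin (3 * x) = 3 * sin x - 4 * sin x ^ 3.
Proof.
  replace (3 * x) with (2 * x + x) by ring.
  rewrite sin_plus, sin_2a, cos_2a_sin.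
  pose proof (sin2_cos2 x). unfold Rsqr in H.
  assert (E: cos x * cos x = 1 - sin x * sin x) by lra.
  replace (2 * sin x * cos x * cos x) with (2*sin x*(cos x*cos x)) by ring.
  rewrite E; ring.
Qed.

Lemma Psi32 t x : Psi (3/2) t (3 * x) =
   t * sin x + 2 * (1 - t) * (3 * sin x - 4 * sin x ^ 3) * (1 - 2 * sin x * sin x).
Proof.
  unfold Psi.
  replace ((1 - 1 / (3/2)) * (3 * x)) with x by field.
  replace (3 * x / (3/2)) with (2 * x) by field.
  rewrite sin3, cos_2a_sin. ring.
Qed.

Lemma g32 : g (3/2) = 1/5.
Proof.
  apply g_eq; [lra|]. split.
  - intros phi Hphi. replace phi with (3 * (phi/3)) by field.
    rewrite Psi32. set (x := phi/3).
    assert (0 <= sin x) by (apply sin_ge_0; unfold x; pose proof PI_RGT_0; lra).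
    set (s0 := sin x) in *.
    assert (E: 1 / 5 * s0 + 2 * (1 - 1 / 5) * (3 * s0 - 4 * s0 ^ 3) * (1 - 2 * s0 * s0)
              = s0 * (8 * s0 * s0 - 5)^2 / 5) by (field).
    rewrite E. apply Rmult_le_pos; [|lra]. apply Rmult_le_pos; auto. apply pow2_ge_0.
  - intros t Ht. destruct (Rle_lt_dec (1/5) t) as [|Hlt]; auto. exfalso.
    set (c := sqrt (5/8)).
    assert (Hc2 : c * c = 5/8) by (unfold c; apply sqrt_sqrt; lra).
    assert (Hc0 : 0 < c) by (unfold c; apply sqrt_lt_R0; lra).
    assert (Hc1 : c <= 1) by nra.
    set (x := asin c).
    assert (Hsx : sin x = c) by (unfold x; apply sin_asin; lra).
    pose proof (asin_bound c) as Hb. fold x in Hb.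
    assert (Hx0 : 0 < x).
    { destruct (Rle_lt_dec x 0); auto. exfalso.
      assert (sin x <= 0). { rewrite <- (Ropp_involutive x), sin_neg.
        assert (0 <= sin (-x)) by (apply sin_ge_0; pose proof PI_RGT_0; lra). lra. }
      lra. }
    assert (Hx3 : x < PI / 3).
    { destruct (Rle_lt_dec (PI/3) x) as [Hle|]; auto. exfalso.
      assert (sin (PI/3) <= sin x) by (apply sin_incr_1; pose proof PI_RGT_0; lra).
      rewrite sin_PI3 in H. 
      assert (sqrt 3 * sqrt 3 = 3) by (apply sqrt_sqrt; lra).
      assert (0 <= sqrt 3) by apply sqrt_pos. nra. }
    assert (Hphi : 0 < 3 * x < PI) by lra.
    specialize (Ht _ Hphi). rewrite Psi32, Hsx in Ht.
    assert (E : t * c + 2 * (1 - t) * (3 * c - 4 * c ^ 3) * (1 - 2 * c * c)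
      = c * (t + 2 * (1-t) * (3 - 4 * (c*c)) * (1 - 2 * (c * c)))) by ring.
    rewrite E, Hc2 in Ht. nra.
Qed.

Lemma cross_id A B C :
  sin (A - B) * (- sin (A + C)) - sin (A - C) * (- sin (A + B))
  = - (2 * sin A * cos A) * sin (C - B).
Proof. rewrite !sin_minus, !sin_plus. ring. Qed.

Lemma g_decr p q : 1 <= p -> p < q -> q <= 2 -> g q < g p.
Proof.
  intros Hp Hpq Hq2.
  pose proof (inv_bounds p Hp) as Hsp. pose proof (inv_bounds q (Rlt_le _ _ (Rle_lt_trans _ _ _ Hp Hpq))) as Hsq.
  assert (Hlt : / q < / p) by (apply Rinv_lt_contravar; nra).
  assert (Hh : / 2 <= / q) by (apply Rinv_le_contravar; lra).
  set (sp := /p) in *. set (sq := /q) in *.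
  assert (HT0 : 0 < g p) by (apply g_pos; lra).
  assert (HT1 : g p <= 1) by (apply g_le1; lra).
  pose proof (g_spec p Hp) as [HadmT _].
  set (T := g p) in *.
  pose proof PI_RGT_0 as HPI.
  set (phi1 := PI / (1 + sq)).
  assert (Hphi1 : (1 + sq) * phi1 = PI) by (unfold phi1; field; lra).
  assert (Hphi1b : PI / 2 <= phi1 < PI) by (split; nra).
  assert (Hq1 : 1 <= q) by lra.
  assert (Hpos : forall phi, phi1 <= phi <= PI -> 0 < F q T phi).
  { intros phi Hphi. destruct (Req_dec phi phi1) as [->|Hne1].
    - unfold F. fold sq. rewrite Hphi1, sin_PI.
      assert (0 < sin ((1 - sq) * phi1)) by (apply sin_gt_0; nra). lra.
    - destruct (Req_dec phi PI) as [->|HnePI].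
      + rewrite F_PI by lra. fold sq. apply Rmult_lt_0_compat; auto.
        apply sin_gt_0; nra.
      + assert (Hin : phi1 < phi < PI) by lra.
        assert (Hphi0 : 0 < phi < PI) by lra.
        pose proof (HadmT phi Hphi0) as Ha.
        rewrite PsiF in Ha by lra. unfold F in *. fold sp in Ha. fold sq.
        assert (Hdq : sin ((1 + sq) * phi) < 0) by (apply sin_lt_0; nra).
        assert (Hdp : sin ((1 + sp) * phi) < 0) by (apply sin_lt_0; nra).
        assert (H2 : sin (2 * phi) < 0) by (apply sin_lt_0; nra).
        assert (Hd : 0 < sin ((sp - sq) * phi)) by (apply sin_gt_0; nra).
        pose proof (cross_id phi (sq * phi) (sp * phi)) as Hc.
        rewrite <- sin_2a in Hc.
        replace (phi - sq * phi) with ((1 - sq) * phi) in Hc by ring.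
        replace (phi + sp * phi) with ((1 + sp) * phi) in Hc by ring.
        replace (phi - sp * phi) with ((1 - sp) * phi) in Hc by ring.
        replace (phi + sq * phi) with ((1 + sq) * phi) in Hc by ring.
        replace (sp * phi - sq * phi) with ((sp - sq) * phi) in Hc by ring.
        set (Nq := sin ((1 - sq) * phi)) in *. set (Np := sin ((1 - sp) * phi)) in *.
        set (Bq := sin ((1 + sq) * phi)) in *. set (Bp := sin ((1 + sp) * phi)) in *.
        assert (0 < sin (2 * phi) * sin ((sp - sq) * phi) * (-1)) by nra.
        assert (Nq * (- Bp) > Np * (- Bq)) by nra.
        assert (Np * (- Bq) >= (1 - T) * (- Bp) * (- Bq)) by nra.
        nra. }
  destruct (continuity_ab_min (F q T) phi1 PI) as [mx [Hmin Hmx]]; [lra| intros; apply F_cont |].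
  set (m := F q T mx). assert (Hm : 0 < m) by (apply Hpos; auto).
  assert (Hadm : admissible q (T - m/2)).
  { intros phi Hphi. rewrite PsiF by lra.
    assert (E : F q (T - m/2) phi = F q T phi + m/2 * sin ((1 + sq) * phi))
      by (unfold F; fold sq; ring).
    rewrite E. destruct (Rle_lt_dec phi phi1).
    - assert (0 <= sin ((1 + sq) * phi)) by (apply sin_ge_0; nra).
      assert (0 <= sin ((1 - sq) * phi)) by (apply sin_ge_0; nra).
      unfold F. fold sq. nra.
    - pose proof (Hmin phi (conj (Rlt_le _ _ r) (Rlt_le _ _ (proj2 Hphi)))).
      pose proof (SIN_bound ((1 + sq) * phi)). fold m in H. nra. }
  pose proof (proj2 (g_spec q Hq1) _ Hadm). lra.
Qed.

Lemma g_mono p x : 1 <= p -> p <= x -> g x <= g p.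
Proof.
  intros Hp Hx. destruct (Req_dec p x) as [->|]; [lra|].
  destruct (Rle_lt_dec x 2).
  - pose proof (g_decr p x Hp); lra.
  - rewrite (g_ge2 x) by lra. apply g_ge0; auto.
Qed.

Lemma inv_lip p x : 1 <= p -> 1 <= x -> Rabs (/p - /x) <= Rabs (x - p).
Proof.
  intros. replace (/p - /x) with ((x - p) * / (p * x)) by (field; lra).
  rewrite Rabs_mult. rewrite (Rabs_right (/ (p*x))).
  2: { apply Rle_ge, Rlt_le, Rinv_0_lt_compat; nra. }
  assert (/ (p * x) <= 1). { rewrite <- Rinv_1. apply Rinv_le_contravar; nra. }
  assert (0 <= Rabs (x - p)) by apply Rabs_pos.
  assert (0 < / (p*x)) by (apply Rinv_0_lt_compat; nra). nra.
Qed.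

Lemma F_lip p x t phi : 1 <= p -> 1 <= x -> 0 <= phi <= PI ->
  Rabs (F x t phi - F p t phi) <= (1 + Rabs (1 - t)) * PI * Rabs (x - p).
Proof.
  intros Hp Hx Hphi. unfold F.
  pose proof (sin_lip ((1 - /x) * phi) ((1 - /p) * phi)) as H1.
  pose proof (sin_lip ((1 + /x) * phi) ((1 + /p) * phi)) as H2.
  replace ((1 - /x) * phi - (1 - /p) * phi) with ((/p - /x) * phi) in H1 by ring.
  replace ((1 + /x) * phi - (1 + /p) * phi) with (- ((/p - /x) * phi)) in H2 by ring.
  rewrite Rabs_Ropp in H2. rewrite Rabs_mult, (Rabs_right phi) in H1, H2 by lra.
  pose proof (inv_lip p x Hp Hx).
  assert (Hk : Rabs (/p - /x) * phi <= Rabs (x - p) * PI).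
  { apply Rmult_le_compat; auto. apply Rabs_pos. lra. lra. }
  replace (sin ((1 - / x) * phi) + (1 - t) * sin ((1 + / x) * phi) -
     (sin ((1 - / p) * phi) + (1 - t) * sin ((1 + / p) * phi)))
   with ((sin ((1 - / x) * phi) - sin ((1 - / p) * phi)) + (1 - t) * (sin ((1 + / x) * phi) - sin ((1 + / p) * phi))) by ring.
  eapply Rle_trans. apply Rabs_triang. rewrite Rabs_mult.
  assert (0 <= Rabs (1 - t)) by apply Rabs_pos.
  assert (Rabs (1 - t) * Rabs (sin ((1 + / x) * phi) - sin ((1 + / p) * phi)) <= Rabs (1-t) * (Rabs (x - p) * PI))
    by (apply Rmult_le_compat_l; lra).
  nra.
Qed.

Lemma lsc p eps : 1 <= p -> 0 < eps -> exists d, 0 < d /\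
  forall x, 1 <= x -> Rabs (x - p) < d -> g p - eps < g x.
Proof.
  intros Hp He. set (t0 := g p - eps).
  assert (Hna : ~ admissible p t0).
  { intro Ha. pose proof (proj2 (g_spec p Hp) _ Ha). unfold t0 in H. lra. }
  unfold admissible in Hna. apply not_all_ex_not in Hna. destruct Hna as [phi0 Hphi0].
  apply imply_to_and in Hphi0. destruct Hphi0 as [Hphi0 Hneg]. apply Rnot_le_lt in Hneg.
  rewrite PsiF in Hneg by lra.
  set (eta := - F p t0 phi0). set (K := (1 + Rabs (1 - t0)) * PI).
  assert (HK : 0 < K) by (unfold K; pose proof (Rabs_pos (1-t0)); pose proof PI_RGT_0; nra).
  exists (eta / K). split. apply Rdiv_lt_0_compat; unfold eta; lra.
  intros x Hx Hd.
  destruct (Rle_lt_dec (g x) t0) as [Hle|]; auto. exfalso.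
  assert (Hadm : admissible x t0).
  { apply (adm_convex x (g x) 1); auto. apply g_spec; auto. apply adm1; auto.
    split; auto. pose proof (g_le1 p Hp). unfold t0; lra. }
  specialize (Hadm phi0 Hphi0). rewrite PsiF in Hadm by lra.
  pose proof (F_lip p x t0 phi0 Hp Hx (conj (Rlt_le _ _ (proj1 Hphi0)) (Rlt_le _ _ (proj2 Hphi0)))).
  fold K in H.
  assert (K * Rabs (x - p) < eta).
  { apply Rmult_lt_reg_r with (/K). apply Rinv_0_lt_compat; auto.
    rewrite (Rmult_comm K), Rmult_assoc, Rinv_r by lra. unfold Rdiv in Hd. lra. }
  pose proof (Rle_abs (F x t0 phi0 - F p t0 phi0)) as Hab.
  unfold eta in *. lra.
Qed.

Lemma usc p eps : 1 <= p -> 0 < eps -> exists d, 0 < d /\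
  forall x, 1 <= x -> Rabs (x - p) < d -> g x < g p + eps.
Proof.
  intros Hp He.
  destruct (Rlt_le_dec 2 p) as [Hp2|Hp2].
  { exists (p - 2). split. lra. intros x Hx Hd.
    pose proof (Rle_abs (p - x)). rewrite Rabs_minus_sym in Hd.
    rewrite !g_ge2 by lra. lra. }
  set (T := g p). pose proof (g_ge0 p Hp). pose proof (g_le1 p Hp). fold T in H, H0.
  destruct (Rle_lt_dec 1 (T + eps/2)) as [Hbig|Hsmall].
  { exists 1. split. lra. intros x Hx _. pose proof (g_le1 x Hx). lra. }
  destruct (Req_dec p 1) as [Hp1|Hp1].
  { exists 1. split. lra. intros x Hx _. pose proof (g_mono p x Hp ltac:(lra)). fold T in H1. lra. }
  pose proof PI_RGT_0 as HPI.
  pose proof (inv_bounds p Hp) as Hs.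
  assert (Hs1 : /p < 1) by (rewrite <- Rinv_1; apply Rinv_lt_contravar; lra).
  assert (Hs2 : /2 <= /p) by (apply Rinv_le_contravar; lra).
  set (s := /p) in *.
  set (t := T + eps/2).
  set (c1 := sin ((1 - s) * PI / 2)).
  assert (Hc1 : 0 < c1) by (apply sin_gt_0; nra).
  set (m := Rmin (c1/2) (eps * (c1/2) / 2)).
  assert (Hm : 0 < m) by (apply Rmin_glb_lt; nra).
  assert (Hm1 : m <= c1/2) by apply Rmin_l.
  assert (Hm2 : m <= eps * (c1/2) / 2) by apply Rmin_r.
  exists (m / (2 * PI)). split. apply Rdiv_lt_0_compat; lra.
  intros x Hx Hd.
  destruct (Rle_lt_dec p x) as [Hpx|Hxp].
  { pose proof (g_mono p x Hp Hpx) as Hm3. fold T in Hm3. lra. }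
  assert (Hr : s < /x <= 1).
  { split. apply Rinv_lt_contravar; nra. rewrite <- Rinv_1; apply Rinv_le_contravar; lra. }
  set (r := /x) in *.
  assert (Hadm : admissible x t).
  { intros phi Hphi. rewrite PsiF by lra.
    destruct (Rle_lt_dec ((1 + r) * phi) PI) as [Hreg|Hreg].
    - unfold F. fold r.
      assert (0 <= sin ((1 + r) * phi)) by (apply sin_ge_0; nra).
      assert (0 <= sin ((1 - r) * phi)) by (apply sin_ge_0; nra).
      unfold t in *. nra.
    - assert (Hphi2 : PI / 2 < phi).
      { destruct (Rle_lt_dec phi (PI/2)); auto. nra. }
      assert (HFp : m <= F p t phi).
      { assert (Ha : c1 <= sin ((1 - s) * phi)).
        { apply sin_incr_1; nra. }
        pose proof (proj1 (g_spec p Hp) phi Hphi) as HT. rewrite PsiF in HT by lra.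
        fold T in HT. unfold F in HT |- *. fold s in HT |- *.
        destruct (Rle_lt_dec (sin ((1 + s) * phi)) (- (c1/2))).
        - unfold t. nra.
        - unfold t. nra. }
      pose proof (F_lip p x t phi Hp Hx (conj (Rlt_le _ _ (proj1 Hphi)) (Rlt_le _ _ (proj2 Hphi)))) as Hl.
      rewrite (Rabs_right (1 - t)) in Hl by (unfold t; lra).
      pose proof (Rle_abs (F p t phi - F x t phi)) as Hab. rewrite Rabs_minus_sym in Hab.
      assert (Hxp' : Rabs (x - p) * (2 * PI) < m).
      { apply Rmult_lt_reg_r with (/ (2 * PI)). apply Rinv_0_lt_compat; lra.
        rewrite Rmult_assoc, Rinv_r by lra. unfold Rdiv in Hd. lra. }
      assert (0 <= Rabs (x - p)) by apply Rabs_pos.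
      assert (Ht0 : 0 <= t) by (unfold t; lra).
      assert (0 <= t * (PI * Rabs (x - p))) by (apply Rmult_le_pos; [lra| apply Rmult_le_pos; lra]).
      assert ((1 + (1 - t)) * PI * Rabs (x - p) <= Rabs (x - p) * (2 * PI)) by nra.
      lra. }
  pose proof (proj2 (g_spec x Hx) _ Hadm). unfold t in H1. lra.
Qed.

Theorem mainTheorem2 :
  (forall p : R, 1 <= p -> is_min (admissible p) (g p)) /\
  (forall p : R, 1 <= p -> limit1_in g (fun q => 1 <= q) (g p) p) /\
  g 1 = 1 /\
  (forall p : R, 2 <= p -> g p = 0) /\
  (forall p q : R, 1 <= p -> p < q -> q <= 2 -> g q < g p) /\
  g (3 / 2) = 1 / 5.
Proof.
  split; [exact g_spec|]. split.
  { intros p Hp eps He.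
    destruct (lsc p eps Hp He) as [d1 [Hd1 H1]].
    destruct (usc p eps Hp He) as [d2 [Hd2 H2]].
    exists (Rmin d1 d2). split. apply Rmin_glb_lt; auto.
    intros x [Hx Hdx]. simpl in *. unfold R_dist in *.
    pose proof (Rmin_l d1 d2). pose proof (Rmin_r d1 d2).
    specialize (H1 x Hx ltac:(lra)). specialize (H2 x Hx ltac:(lra)).
    apply Rabs_def1; lra. }
  split; [exact g1|]. split; [exact g_ge2|]. split; [exact g_decr|]. exact g32.
Qed.
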